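(* Let $i\in\{1,2\}$ and let $\alpha_1,\dots,\alpha_N$ be $x_i$-curves in $\mathbb{R}^2$. Then there are $x_i$-curves $\beta_j=\gamma^i(f_j)$, $j=1,\dots,N$, such that $\alpha_1\cup\dots\cup\alpha_N=\beta_1\cup\dots\cup\beta_N$ and $f_{j-1}(t)\le f_j(t)$ for all $t\in\mathbb{R}$ and all $1<j\le N$. If the curves $\alpha_j$ are piecewise linear, then so are the curves $\beta_j$.
   Context: For a $1$-Lipschitz $f:\mathbb{R}\to\mathbb{R}$, the $x_1$-curve parametrized by $f$ is $\gamma^1(f)=\{(t,f(t)):t\in\mathbb{R}\}$ and the $x_2$-curve is $\gamma^2(f)=\{(f(t),t):t\in\mathbb{R}\}$. An $x_i$-curve is a set of this form; it is piecewise linear if its parametrization is. *)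

(* Defs.v *)
From Stdlib Require Import Reals.
Open Scope R_scope.

Definition lipschitz1 (f : R -> R) : Prop :=
  forall s t : R, Rabs (f s - f t) <= Rabs (s - t).

Definition gamma (i : nat) (f : R -> R) (p : R * R) : Prop :=
  exists t : R, p = (if Nat.eqb i 1 then (t, f t) else (f t, t)).

Definition pwlin (f : R -> R) : Prop :=
  forall a b : R, a < b ->
    exists (k : nat) (t : nat -> R),
      t 0%nat = a /\ t k = b /\
      (forall m, (m < k)%nat -> t m < t (S m)) /\
      (forall m, (m < k)%nat -> exists c d : R,
          forall x, t m <= x <= t (S m) -> f x = c * x + d).

Definition is_curve (i : nat) (A : R * R -> Prop) : Prop :=
  exists f : R -> R, lipschitz1 f /\ (forall p, A p <-> gamma i f p).

Definition is_pl_curve (i : nat) (A : R * R -> Prop) : Prop :=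
  exists f : R -> R, lipschitz1 f /\ pwlin f /\ (forall p, A p <-> gamma i f p).

(* Main.v *)
Require Import Defs.
From Stdlib Require Import Reals.
From Stdlib Require Import Lra Lia Psatz FunctionalExtensionality IndefiniteDescription.
Open Scope R_scope.

Definition aff (f : R -> R) a b := exists c d, forall x, a <= x <= b -> f x = c * x + d.

Inductive PL (f : R -> R) : R -> R -> Prop :=
| PL_aff : forall a b, a < b -> aff f a b -> PL f a b
| PL_cat : forall a b c, PL f a b -> PL f b c -> PL f a c.

Lemma PL_lt f a b : PL f a b -> a < b.
Proof. induction 1; lra. Qed.

Lemma aff_restr f a b a' b' : aff f a b -> a <= a' -> b' <= b -> aff f a' b'.
Proof. intros [c [d H]] ? ?. exists c, d. intros; apply H; lra. Qed.

Lemma PL_restr f a c : PL f a c -> forall a' b', a <= a' -> a' < b' -> b' <= c -> PL f a' b'.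
Proof.
  induction 1; intros a' b' H1 H2 H3.
  - apply PL_aff; auto. eapply aff_restr; eauto.
  - destruct (Rle_dec b' b). { apply IHPL1; lra. }
    destruct (Rle_dec b a'). { apply IHPL2; lra. }
    apply PL_cat with b; [apply IHPL1|apply IHPL2]; lra.
Qed.

Lemma pwlin_PL f : pwlin f -> forall a b, a < b -> PL f a b.
Proof.
  intros H a b Hab. destruct (H a b Hab) as [k [t [H0 [Hk [Hi Hp]]]]].
  assert (Hm : forall m, (1 <= m <= k)%nat -> t 0%nat < t m /\ PL f (t 0%nat) (t m)).
  { induction m; intros Hm; [lia|].
    destruct (Nat.eq_dec m 0) as [->|Hm0].
    - split; [apply Hi; lia|]. apply PL_aff; [apply Hi; lia|].
      destruct (Hp 0%nat ltac:(lia)) as [c [d Hc]]. exists c, d; auto.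
    - destruct IHm as [IH1 IH2]; [lia|].
      assert (t m < t (S m)) by (apply Hi; lia).
      split; [lra|]. apply PL_cat with (t m); auto. apply PL_aff; auto.
      destruct (Hp m ltac:(lia)) as [c [d Hc]]. exists c, d; auto. }
  destruct k. { subst; lra. }
  destruct (Hm (S k) ltac:(lia)) as [_ HH]. rewrite <- H0, <- Hk. auto.
Qed.

Lemma PL_part f a b : PL f a b -> exists (k : nat) (t : nat -> R),
      t 0%nat = a /\ t k = b /\
      (forall m, (m < k)%nat -> t m < t (S m)) /\
      (forall m, (m < k)%nat -> exists c d : R,
          forall x, t m <= x <= t (S m) -> f x = c * x + d).
Proof.
  induction 1 as [a b Hab [c [d Hc]] | a b c H1 IH1 H2 IH2].
  - exists 1%nat, (fun m => match m with 0%nat => a | _ => b end).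
    repeat split; auto; intros m Hm; assert (m = 0%nat) by lia; subst; simpl; auto.
    exists c, d; auto.
  - apply PL_lt in H1. apply PL_lt in H2.
    destruct IH1 as [k1 [t1 [A1 [B1 [C1 D1]]]]].
    destruct IH2 as [k2 [t2 [A2 [B2 [C2 D2]]]]].
    assert (k1 <> 0%nat) by (intro; subst; lra).
    assert (k2 <> 0%nat) by (intro; subst; lra).
    exists (k1 + k2)%nat, (fun m => if (m <=? k1)%nat then t1 m else t2 (m - k1)%nat).
    split; [simpl; auto|]. split.
    { destruct (Nat.leb_spec (k1+k2) k1); [lia|]. replace (k1+k2-k1)%nat with k2 by lia; auto. }
    split.
    + intros m Hm. destruct (Nat.leb_spec m k1), (Nat.leb_spec (S m) k1).
      * apply C1; lia.
      * assert (m = k1) by lia; subst m. replace (S k1 - k1)%nat with 1%nat by lia.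
        rewrite B1, <- A2. apply C2; lia.
      * lia.
      * replace (S m - k1)%nat with (S (m - k1)) by lia. apply C2; lia.
    + intros m Hm. destruct (Nat.leb_spec m k1), (Nat.leb_spec (S m) k1).
      * apply D1; lia.
      * assert (m = k1) by lia; subst m. replace (S k1 - k1)%nat with 1%nat by lia.
        rewrite B1, <- A2. apply D2; lia.
      * lia.
      * replace (S m - k1)%nat with (S (m - k1)) by lia. apply D2; lia.
Qed.

Lemma PL_pwlin f : (forall a b, a < b -> PL f a b) -> pwlin f.
Proof. intros H a b Hab. apply PL_part, H, Hab. Qed.

Lemma conv c d a b x : a < b -> a <= x <= b -> c*a+d <= 0 -> c*b+d <= 0 -> c*x+d <= 0.
Proof.
  intros.
  assert (E : (b-a)*(c*x+d) = (b-x)*(c*a+d) + (x-a)*(c*b+d)) by ring.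
  assert ((b-x)*(c*a+d) <= 0) by nra.
  assert ((x-a)*(c*b+d) <= 0) by nra.
  nra.
Qed.

Lemma aff_min_le f g a b : a < b -> aff f a b -> aff g a b -> f a <= g a -> f b <= g b ->
  aff (fun x => Rmin (f x) (g x)) a b.
Proof.
  intros Hab [c1 [d1 Hf]] [c2 [d2 Hg]] Ha Hb. exists c1, d1. intros x Hx.
  rewrite Hf, Hg in Ha, Hb by lra. rewrite Hf, Hg by lra.
  assert ((c1-c2)*x + (d1-d2) <= 0) by (apply conv with a b; lra).
  rewrite Rmin_left; lra.
Qed.

Lemma aff_min_ge f g a b : a < b -> aff f a b -> aff g a b -> g a <= f a -> g b <= f b ->
  aff (fun x => Rmin (f x) (g x)) a b.
Proof.
  intros. destruct (aff_min_le g f a b) as [c [d H']]; auto.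
  exists c, d. intros. rewrite Rmin_comm; auto.
Qed.

Lemma cross f g a b : a < b -> aff f a b -> aff g a b -> (f a - g a) * (f b - g b) < 0 ->
  exists x0, a < x0 < b /\ f x0 = g x0.
Proof.
  intros Hab [c1 [d1 Hf]] [c2 [d2 Hg]] Hp.
  rewrite !Hf, !Hg in Hp by lra.
  set (Da := (c1-c2)*a + (d1-d2)). set (Db := (c1-c2)*b + (d1-d2)).
  assert (HP : Da * Db < 0) by (unfold Da, Db; nra).
  assert (Hne : Da - Db <> 0) by nra.
  set (s := Da / (Da - Db)).
  assert (Hs : s * (Da - Db) = Da) by (unfold s; field; auto).
  assert (0 < s < 1).
  { destruct (Rlt_or_le 0 Da).
    - assert (Db < 0) by nra. split; nra.
    - assert (Da < 0) by nra. assert (0 < Db) by nra. split; nra. }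
  exists (a + s*(b-a)). split; [split; nra|].
  rewrite Hf, Hg by nra.
  assert (E : (c1-c2)*(a+s*(b-a)) + (d1-d2) = Da - s*(Da-Db)) by (unfold Da, Db; ring).
  lra.
Qed.

Lemma min_aff_PL f g a b : a < b -> aff f a b -> aff g a b -> PL (fun x => Rmin (f x) (g x)) a b.
Proof.
  intros Hab Hf Hg.
  destruct (Rle_dec (f a) (g a)), (Rle_dec (f b) (g b)).
  - apply PL_aff; auto. apply aff_min_le; auto.
  - destruct (Rle_dec (g a) (f a)).
    + apply PL_aff; auto. apply aff_min_ge; auto; lra.
    + destruct (cross f g a b) as [x0 [Hx0 Hfx]]; auto; [nra|].
      apply PL_cat with x0; apply PL_aff; try lra.
      * apply aff_min_le; try lra; eapply aff_restr; eauto; lra.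
      * apply aff_min_ge; try lra; eapply aff_restr; eauto; lra.
  - destruct (Rle_dec (g b) (f b)).
    + apply PL_aff; auto. apply aff_min_ge; auto; lra.
    + destruct (cross f g a b) as [x0 [Hx0 Hfx]]; auto; [nra|].
      apply PL_cat with x0; apply PL_aff; try lra.
      * apply aff_min_ge; try lra; eapply aff_restr; eauto; lra.
      * apply aff_min_le; try lra; eapply aff_restr; eauto; lra.
  - apply PL_aff; auto. apply aff_min_ge; auto; lra.
Qed.

Lemma PL_min_aff f g a b : PL g a b -> aff f a b -> PL (fun x => Rmin (f x) (g x)) a b.
Proof.
  induction 1 as [a b Hab Hg | a b c H1 IH1 H2 IH2]; intros Hf.
  - apply min_aff_PL; auto.
  - pose proof (PL_lt _ _ _ H1). pose proof (PL_lt _ _ _ H2).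
    apply PL_cat with b; [apply IH1|apply IH2]; eapply aff_restr; eauto; lra.
Qed.

Lemma PL_min f g a b : PL f a b -> PL g a b -> PL (fun x => Rmin (f x) (g x)) a b.
Proof.
  intros Hf; revert g; induction Hf as [a b Hab Hf | a b c H1 IH1 H2 IH2]; intros g Hg.
  - apply PL_min_aff; auto.
  - pose proof (PL_lt _ _ _ H1). pose proof (PL_lt _ _ _ H2).
    apply PL_cat with b; [apply IH1|apply IH2]; eapply PL_restr; eauto; lra.
Qed.

Lemma PL_opp f a b : PL f a b -> PL (fun x => - f x) a b.
Proof.
  induction 1 as [a b Hab [c [d H]] | a b c H1 IH1 H2 IH2].
  - apply PL_aff; auto. exists (-c), (-d). intros; rewrite H; auto; ring.
  - apply PL_cat with b; auto.
Qed.

Lemma pwlin_min f g : pwlin f -> pwlin g -> pwlin (fun x => Rmin (f x) (g x)).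
Proof. intros. apply PL_pwlin. intros. apply PL_min; apply pwlin_PL; auto. Qed.

Lemma pwlin_opp f : pwlin f -> pwlin (fun x => - f x).
Proof. intros. apply PL_pwlin. intros. apply PL_opp; apply pwlin_PL; auto. Qed.

Lemma pwlin_max f g : pwlin f -> pwlin g -> pwlin (fun x => Rmax (f x) (g x)).
Proof.
  intros. replace (fun x => Rmax (f x) (g x)) with
    (fun x => - (fun y => Rmin ((fun z => - f z) y) ((fun z => - g z) y)) x).
  - apply pwlin_opp, pwlin_min; apply pwlin_opp; auto.
  - apply functional_extensionality; intros x. unfold Rmin, Rmax.
    destruct (Rle_dec _ _), (Rle_dec _ _); lra.
Qed.

Lemma lip_min f g : lipschitz1 f -> lipschitz1 g -> lipschitz1 (fun x => Rmin (f x) (g x)).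
Proof.
  intros Hf Hg s t. generalize (Hf s t) (Hg s t). unfold Rmin.
  destruct (Rle_dec (f s) (g s)), (Rle_dec (f t) (g t)); unfold Rabs;
  repeat destruct Rcase_abs; lra.
Qed.

Lemma lip_max f g : lipschitz1 f -> lipschitz1 g -> lipschitz1 (fun x => Rmax (f x) (g x)).
Proof.
  intros Hf Hg s t. generalize (Hf s t) (Hg s t). unfold Rmax.
  destruct (Rle_dec (f s) (g s)), (Rle_dec (f t) (g t)); unfold Rabs;
  repeat destruct Rcase_abs; lra.
Qed.

Definition ins (F : nat -> R -> R) (G : R -> R) (N j : nat) (t : R) : R :=
  if Nat.eqb j 1 then Rmin (F 1%nat t) (G t)
  else if Nat.eqb j (S N) then Rmax (F N t) (G t)
  else Rmax (F (j-1)%nat t) (Rmin (F j t) (G t)).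

Ltac mm := unfold Rmin, Rmax in *;
  repeat match goal with |- context [Rle_dec ?a ?b] => destruct (Rle_dec a b) as [?|?%Rnot_le_lt]
  | H : context [Rle_dec ?a ?b] |- _ => destruct (Rle_dec a b) as [?|?%Rnot_le_lt] end; lra.

Section Ins.
Variables (F : nat -> R -> R) (G : R -> R) (N : nat).
Hypothesis HN : (1 <= N)%nat.
Hypothesis HS : forall j t, (1 < j <= N)%nat -> F (j - 1)%nat t <= F j t.

Lemma ins_sorted j t : (1 < j <= S N)%nat -> ins F G N (j-1) t <= ins F G N j t.
Proof.
  intros Hj. unfold ins.
  destruct (Nat.eqb_spec (j-1) 1), (Nat.eqb_spec (j-1) (S N)), (Nat.eqb_spec j 1),
    (Nat.eqb_spec j (S N)); try lia.
  - mm.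
  - rewrite e. mm.
  - replace (j-1)%nat with N by lia. pose proof (HS N t ltac:(lia)). mm.
  - pose proof (HS (j-1)%nat t ltac:(lia)). pose proof (HS j t ltac:(lia)). mm.
Qed.

Lemma Rmin_or a b : Rmin a b = a \/ Rmin a b = b.
Proof. unfold Rmin; destruct Rle_dec; auto. Qed.
Lemma Rmax_or a b : Rmax a b = a \/ Rmax a b = b.
Proof. unfold Rmax; destruct Rle_dec; auto. Qed.

Lemma ins_vals j t : (1 <= j <= S N)%nat ->
  (exists k, (1 <= k <= N)%nat /\ ins F G N j t = F k t) \/ ins F G N j t = G t.
Proof.
  intros Hj. unfold ins.
  destruct (Nat.eqb_spec j 1); [|destruct (Nat.eqb_spec j (S N))].
  - destruct (Rmin_or (F 1%nat t) (G t)) as [->| ->]; auto. left; exists 1%nat; split; auto; lia.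
  - destruct (Rmax_or (F N t) (G t)) as [->| ->]; auto. left; exists N; split; auto; lia.
  - destruct (Rmax_or (F (j-1)%nat t) (Rmin (F j t) (G t))) as [->| ->].
    + left; exists (j-1)%nat; split; auto; lia.
    + destruct (Rmin_or (F j t) (G t)) as [->| ->]; auto. left; exists j; split; auto; lia.
Qed.

Lemma ins_F k t : (1 <= k <= N)%nat -> exists j, (1 <= j <= S N)%nat /\ ins F G N j t = F k t.
Proof.
  intros Hk. destruct (Rle_dec (F k t) (G t)).
  - exists k. split; [lia|]. unfold ins.
    destruct (Nat.eqb_spec k 1); [subst; mm|].
    destruct (Nat.eqb_spec k (S N)); [lia|].
    pose proof (HS k t ltac:(lia)). mm.
  - exists (S k). split; [lia|]. unfold ins.
    destruct (Nat.eqb_spec (S k) 1); [lia|].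
    destruct (Nat.eqb_spec (S k) (S N)).
    + assert (k = N) by lia. subst. mm.
    + replace (S k - 1)%nat with k by lia. mm.
Qed.

Lemma ins_G t : exists j, (1 <= j <= S N)%nat /\ ins F G N j t = G t.
Proof.
  assert (H : forall m k, (k + m = N)%nat -> (1 <= k)%nat -> F k t <= G t ->
             exists j, (1 <= j <= S N)%nat /\ ins F G N j t = G t).
  { induction m; intros k Hkm Hk HF.
    - exists (S N). split; [lia|]. unfold ins.
      destruct (Nat.eqb_spec (S N) 1); [lia|]. rewrite Nat.eqb_refl.
      replace k with N in HF by lia. mm.
    - destruct (Rle_dec (F (S k) t) (G t)).
      + apply (IHm (S k)); auto; lia.
      + exists (S k). split; [lia|]. unfold ins.
        destruct (Nat.eqb_spec (S k) 1); [lia|].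
        destruct (Nat.eqb_spec (S k) (S N)); [lia|].
        replace (S k - 1)%nat with k by lia. mm. }
  destruct (Rle_dec (F 1%nat t) (G t)).
  - apply (H (N-1)%nat 1%nat); auto; lia.
  - exists 1%nat. split; [lia|]. unfold ins. simpl. mm.
Qed.
End Ins.

Lemma core : forall N (g : nat -> R -> R),
 (forall j, (1<=j<=N)%nat -> lipschitz1 (g j)) ->
 exists f : nat -> R -> R,
  (forall j, (1<=j<=N)%nat -> lipschitz1 (f j)) /\
  (forall t y, (exists j, (1<=j<=N)%nat /\ y = g j t) <-> (exists j, (1<=j<=N)%nat /\ y = f j t)) /\
  (forall j t, (1<j<=N)%nat -> f (j-1)%nat t <= f j t) /\
  ((forall j, (1<=j<=N)%nat -> pwlin (g j)) -> forall j, (1<=j<=N)%nat -> pwlin (f j)).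
Proof.
  induction N as [|N IHN]; intros g Hg.
  - exists g. split; [|split; [|split]]; auto; try tauto. intros; lia.
  - destruct (IHN g (fun j Hj => Hg j ltac:(lia))) as [F [HL [HU [HS HP]]]].
    destruct (Nat.eq_dec N 0) as [->|HN].
    + exists g. split; [|split; [|split]]; auto; try tauto. intros; lia.
    + set (G := g (S N)).
      exists (ins F G N). split; [|split; [|split]].
      * intros j Hj. unfold ins.
        destruct (Nat.eqb_spec j 1); [|destruct (Nat.eqb_spec j (S N))].
        -- apply lip_min; [apply HL; lia | apply Hg; lia].
        -- apply lip_max; [apply HL; lia | apply Hg; lia].
        -- apply lip_max; [apply HL; lia|]. apply lip_min; [apply HL; lia | apply Hg; lia].
      * intros t y. split.
        -- intros [j [Hj ->]]. destruct (Nat.eq_dec j (S N)) as [->|Hne].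
           ++ destruct (ins_G F G N ltac:(lia) t) as [j' [Hj' E]]. exists j'; auto.
           ++ destruct (proj1 (HU t (g j t))) as [k [Hk E]].
              { exists j; split; auto; lia. }
              destruct (ins_F F G N ltac:(lia) HS k t Hk) as [j' [Hj' E']].
              exists j'; split; auto; congruence.
        -- intros [j [Hj ->]]. destruct (ins_vals F G N ltac:(lia) j t Hj) as [[k [Hk E]]|E].
           ++ destruct (proj2 (HU t (F k t))) as [k' [Hk' E']].
              { exists k; auto. }
              exists k'; split; [lia|]. congruence.
           ++ exists (S N); split; [lia|]. rewrite E; reflexivity.
      * intros j t Hj. apply ins_sorted; auto; lia.
      * intros Hpw j Hj. assert (HP' := HP (fun k Hk => Hpw k ltac:(lia))).
        unfold ins.
        destruct (Nat.eqb_spec j 1); [|destruct (Nat.eqb_spec j (S N))].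
        -- apply pwlin_min; [apply HP'; lia | apply Hpw; lia].
        -- apply pwlin_max; [apply HP'; lia | apply Hpw; lia].
        -- apply pwlin_max; [apply HP'; lia|]. apply pwlin_min; [apply HP'; lia | apply Hpw; lia].
Qed.

Lemma gamma_iff i f p : gamma i f p <->
  (if Nat.eqb i 1 then snd p = f (fst p) else fst p = f (snd p)).
Proof.
  destruct p as [x y]. unfold gamma. simpl. destruct (Nat.eqb i 1); split.
  - intros [t H]. inversion H; subst; auto.
  - intros ->. exists x; auto.
  - intros [t H]. inversion H; subst; auto.
  - intros ->. exists y; auto.
Qed.

Lemma gamma_uniq i f f' : (forall p, gamma i f p <-> gamma i f' p) -> f = f'.
Proof.
  intros H. apply functional_extensionality. intros t.
  destruct (Nat.eqb i 1) eqn:Ei.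
  - specialize (H (t, f t)). rewrite !gamma_iff, Ei in H. simpl in H. apply H; auto.
  - specialize (H (f t, t)). rewrite !gamma_iff, Ei in H. simpl in H. apply H; auto.
Qed.

Theorem lemma4p6 (i : nat) (N : nat) (alpha : nat -> (R * R -> Prop)) :
  (i = 1%nat \/ i = 2%nat) ->
  (forall j, (1 <= j <= N)%nat -> is_curve i (alpha j)) ->
  exists f : nat -> R -> R,
    (forall j, (1 <= j <= N)%nat -> lipschitz1 (f j)) /\
    (forall p, (exists j, (1 <= j <= N)%nat /\ alpha j p) <->
               (exists j, (1 <= j <= N)%nat /\ gamma i (f j) p)) /\
    (forall j t, (1 < j <= N)%nat -> f (j - 1)%nat t <= f j t) /\
    ((forall j, (1 <= j <= N)%nat -> is_pl_curve i (alpha j)) ->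
     forall j, (1 <= j <= N)%nat -> pwlin (f j)).
Proof.
  intros _ Hc.
  assert (Hex : forall j, {g : R -> R | (1 <= j <= N)%nat ->
     lipschitz1 g /\ forall p, alpha j p <-> gamma i g p}).
  { intros j. apply constructive_indefinite_description.
    destruct (Compare_dec.le_dec 1 j); [destruct (Compare_dec.le_dec j N)|].
    - destruct (Hc j ltac:(lia)) as [g Hg]. exists g; auto.
    - exists (fun x => x). intros; lia.
    - exists (fun x => x). intros; lia. }
  set (g := fun j => proj1_sig (Hex j)).
  assert (Hg : forall j, (1 <= j <= N)%nat -> lipschitz1 (g j) /\
                 forall p, alpha j p <-> gamma i (g j) p).
  { intros j Hj. unfold g. destruct (Hex j) as [h Hh]. simpl. auto. }
  destruct (core N g (fun j Hj => proj1 (Hg j Hj))) as [F [HL [HU [HS HP]]]].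
  exists F. split; [|split; [|split]]; auto.
  - intros p. split.
    + intros [j [Hj Ha]]. apply (proj2 (Hg j Hj)) in Ha. rewrite gamma_iff in Ha.
      destruct (Nat.eqb i 1) eqn:Ei.
      * destruct (proj1 (HU (fst p) (snd p))) as [k [Hk E]]; [exists j; auto|].
        exists k; split; auto. rewrite gamma_iff, Ei; auto.
      * destruct (proj1 (HU (snd p) (fst p))) as [k [Hk E]]; [exists j; auto|].
        exists k; split; auto. rewrite gamma_iff, Ei; auto.
    + intros [j [Hj Ha]]. rewrite gamma_iff in Ha.
      destruct (Nat.eqb i 1) eqn:Ei.
      * destruct (proj2 (HU (fst p) (snd p))) as [k [Hk E]]; [exists j; auto|].
        exists k; split; auto. apply (proj2 (Hg k Hk)). rewrite gamma_iff, Ei; auto.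
      * destruct (proj2 (HU (snd p) (fst p))) as [k [Hk E]]; [exists j; auto|].
        exists k; split; auto. apply (proj2 (Hg k Hk)). rewrite gamma_iff, Ei; auto.
  - intros Hpl. apply HP. intros j Hj.
    destruct (Hpl j Hj) as [f' [_ [Hpw Hf']]].
    replace (g j) with f'; auto.
    apply (gamma_uniq i). intros p. rewrite <- Hf'. apply (proj2 (Hg j Hj)).
Qed.
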